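(* Assume $x_r$ is in the range of $S$. There exists an index $j$ such that $\frac{1}{y_j}|e_j^TSz_j|\ge\omega\|z_j\|$ for some global constant $\omega>0$ that only depends on $S$ and $n$.
   Context: Let $C\in\mathbb{R}^{n\times n}$ be symmetric with zero diagonal, $y\in\mathbb{R}^n$ a positive vector, and $S=C+\mathrm{diag}(y)$. Consider the Gauss-Seidel method on $\min_x x^TSx$, which cyclically minimizes over each coordinate: starting from $x_r=z_1$, for $i=1,\ldots,n$ the vector $z_{i+1}$ equals $z_i$ except in coordinate $i$, where $(z_{i+1})_i=-\frac{1}{y_i}\sum_{j}c_{ij}(z_i)_j$; then $x_{r+1}=z_{n+1}$. Here $e_j$ is the $j$-th standard basis vector and $\|\cdot\|$ the Euclidean norm. *)

(* Defs.v *)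
From HB Require Import structures.
From mathcomp Require Import all_boot all_order all_algebra.
Set Implicit Arguments. Unset Strict Implicit. Unset Printing Implicit Defensive.
Import Order.TTheory GRing.Theory Num.Theory.
Local Open Scope ring_scope.

Definition Smat (R : pzRingType) (n : nat) (C : 'M[R]_n) (y : 'I_n -> R) : 'M[R]_n :=
  C + diag_mx (\row_i y i).

Definition vnorm (R : rcfType) (n : nat) (v : 'cV[R]_n) : R :=
  Num.sqrt (\sum_(i < n) v i 0 ^+ 2).

Definition gs_step (R : fieldType) (n : nat) (C : 'M[R]_n) (y : 'I_n -> R)
  (k : nat) (z : 'cV[R]_n) : 'cV[R]_n :=
  \col_i (if (i : nat) == k then - (y i)^-1 * \sum_j C i j * z j 0 else z i 0).

(* gs_iter x k = z_{k+1} in the paper's 1-indexed notation: z_1 = x_r and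
   z_{i+1} is obtained from z_i by updating coordinate i. *)
Fixpoint gs_iter (R : fieldType) (n : nat) (C : 'M[R]_n) (y : 'I_n -> R)
  (x : 'cV[R]_n) (k : nat) : 'cV[R]_n :=
  match k with
  | 0 => x
  | k'.+1 => gs_step C y k' (gs_iter C y x k')
  end.

(* Main.v *)
Require Import Defs.
From HB Require Import structures.
From mathcomp Require Import all_boot all_order all_algebra.
Import Order.TTheory GRing.Theory Num.Theory.
Local Open Scope ring_scope.

Lemma exists_max_ord (R : realDomainType) n (F : 'I_n -> R) :
  (0 < n)%N -> exists i, forall k, F k <= F i.
Proof.
case: n F => // n F _.
have [i _ Hi] := @arg_maxP _ _ _ (@ord0 n) predT F isT.
by exists i => k; apply: Hi.
Qed.

Lemma single_le_sum (R : realDomainType) n (F : 'I_n -> R) i :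
  (forall k, 0 <= F k) -> F i <= \sum_k F k.
Proof.
move=> H; rewrite (bigD1 i) //= lerDl; exact: sumr_ge0.
Qed.

Theorem lemma12 (R : rcfType) (n : nat) (C : 'M[R]_n) (y : 'I_n -> R) :
  (0 < n)%N ->
  C^T = C ->
  (forall i, C i i = 0) ->
  (forall i, 0 < y i) ->
  exists omega : R, 0 < omega /\
    forall x : 'cV[R]_n, (exists w : 'cV[R]_n, x = Smat C y *m w) ->
      exists j : 'I_n,
        (y j)^-1 * `|(Smat C y *m gs_iter C y x j) j 0|
          >= omega * vnorm (gs_iter C y x j).
Proof.
move=> n0 CT Cd yp.
set S := Smat C y.
have ST : S^T = S by rewrite /S /Smat linearD /= CT tr_diag_mx.
set P := pinvmx S.
set K1 : R := \sum_i \sum_k `|P k i|.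
set K2 : R := \sum_i (y i + \sum_j `|S i j|).
have K1ge0 : 0 <= K1 by apply: sumr_ge0 => i _; apply: sumr_ge0.
have K2ge0 : 0 <= K2.
  apply: sumr_ge0 => i _; apply: addr_ge0; first exact: ltW.
  by apply: sumr_ge0.
set K : R := K1 * K2 + 1.
have Kgt0 : 0 < K by rewrite /K; apply: ltr_wpDl; [exact: mulr_ge0|exact: ltr01].
have n0R : 0 < (n%:R : R) by rewrite ltr0n.
exists ((n%:R * (K + 1))^-1).
split; first by rewrite invr_gt0 mulr_gt0 // addr_gt0.
move=> x [w xw].
set z := gs_iter C y x.
set f := fun i : 'I_n => (y i)^-1 * (S *m z i) i 0.
have yne0 : forall i, y i != 0 by move=> i; rewrite gt_eqF.
have Srow : forall (v : 'cV_n) (i : 'I_n),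
    (S *m v) i 0 = \sum_j C i j * v j 0 + y i * v i 0.
  by move=> v i; rewrite /S /Smat mulmxDl mul_diag_mx !mxE.
have stepE : forall (k : 'I_n) i,
    z k.+1 i 0 = z k i 0 - (if (i : nat) == k then f k else 0).
  move=> k i; rewrite /z /= /gs_step mxE -/z.
  case: eqP => [Eik|_]; last by rewrite subr0.
  have -> : i = k by apply: val_inj.
  by rewrite /f Srow mulrDr mulrA mulVf // mul1r opprD addrCA subrr addr0 mulNr.
have zB : forall k, (k <= n)%N -> forall i,
    z k i 0 = x i 0 - (if (i < k)%N then f i else 0).
  elim=> [|k IH] kn i; first by rewrite subr0.
  have kn' : (k < n)%N := kn.
  rewrite (stepE (Ordinal kn') i).
  have E := IH (ltnW kn') i.
  rewrite -[z (Ordinal kn') i 0]/(z k i 0) E.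
  case: (eqVneq i (Ordinal kn')) => [->|ne].
    have -> : (Ordinal kn' < k)%N = false by rewrite ltnn.
    have -> : (Ordinal kn' < k.+1)%N = true by rewrite ltnS leqnn.
    by rewrite eqxx subr0.
  have ne' : (nat_of_ord i != nat_of_ord (Ordinal kn')).
    by apply: contra ne => /eqP h; apply/eqP/val_inj.
  rewrite (negbTE ne') subr0 [(i < k.+1)%N]ltnS [(i <= k)%N]leq_eqVlt.
  by rewrite -[nat_of_ord (Ordinal kn')]/k in ne'; rewrite (negbTE ne').
have Sx : forall i : 'I_n,
    (S *m x) i 0 = y i * f i + \sum_j S i j * (if (j < i)%N then f j else 0).
  move=> i.
  rewrite /f mulrA mulfV // mul1r !mxE.
  under [X in _ = X + _]eq_bigr => j _ do rewrite (zB i (ltnW (ltn_ord i))) mulrBr.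
  by rewrite sumrB subrK.
have [jm Hjm] := @exists_max_ord _ _ (fun i => `|f i|) n0.
set m : R := `|f jm|.
have mge0 : 0 <= m by apply: normr_ge0.
have Sxb : forall i, `|(S *m x) i 0| <= K2 * m.
  move=> i; rewrite Sx.
  apply: le_trans (ler_normD _ _) _.
  apply: (@le_trans _ _ ((y i + \sum_j `|S i j|) * m)).
    rewrite mulrDl; apply: lerD.
      by rewrite normrM gtr0_norm // ler_wpM2l // ltW.
    rewrite big_distrl /=; apply: le_trans (ler_norm_sum _ _ _) _.
    apply: ler_sum => j _; rewrite normrM ler_wpM2l //.
    by case: ifP => _; [exact: Hjm|rewrite normr0].
  apply: ler_wpM2r => //.
  apply: (@single_le_sum _ _ (fun i => y i + \sum_j `|S i j|)) => k.
  by apply: addr_ge0; [exact: ltW|apply: sumr_ge0].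
have [jx Hjx] := @exists_max_ord _ _ (fun i => `|x i 0|) n0.
set Mx : R := `|x jx 0|.
have Mxge0 : 0 <= Mx by apply: normr_ge0.
set v := x^T *m P.
have vS : v *m S = x^T.
  apply: mulmxKpV; rewrite xw trmx_mul ST; exact: submxMl.
have sqE : \sum_i x i 0 ^+ 2 = \sum_i v 0 i * (S *m x) i 0.
  transitivity ((x^T *m x) 0 0).
    by rewrite mxE; apply: eq_bigr => i _; rewrite mxE expr2.
  rewrite -vS -mulmxA [LHS]mxE.
  by apply: eq_bigr.
have vb : forall i, `|v 0 i| <= Mx * \sum_k `|P k i|.
  move=> i; rewrite mxE big_distrr /=.
  apply: le_trans (ler_norm_sum _ _ _) _.
  apply: ler_sum => k _; rewrite normrM mxE ler_wpM2r //; exact: Hjx.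
have Mx2 : Mx * Mx <= Mx * (K1 * K2 * m).
  apply: (@le_trans _ _ (\sum_i x i 0 ^+ 2)).
    rewrite -expr2 /Mx real_normK ?num_real //.
    exact: (@single_le_sum _ _ (fun i => x i 0 ^+ 2) jx (fun k => sqr_ge0 _)).
  rewrite sqE; apply: le_trans (ler_norm _) _.
  apply: le_trans (ler_norm_sum _ _ _) _.
  apply: (@le_trans _ _ (\sum_i (Mx * \sum_k `|P k i|) * (K2 * m))).
    apply: ler_sum => i _; rewrite normrM.
    by apply: ler_pM; [exact: normr_ge0|exact: normr_ge0|exact: vb|exact: Sxb].
  rewrite -big_distrl /= -big_distrr /= -/K1.
  by rewrite !mulrA.
have MxK : Mx <= K * m.
  apply: (@le_trans _ _ (K1 * K2 * m)); last first.
    by rewrite /K mulrDl mul1r lerDl.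
  have [->|Mxne0] := eqVneq Mx 0; first by rewrite !mulr_ge0.
  have Mxgt0 : 0 < Mx by rewrite lt_def Mxne0 Mxge0.
  by rewrite -(ler_pM2l Mxgt0).
exists jm.
have -> : (y jm)^-1 * `|(S *m z jm) jm 0| = m.
  have yi : 0 < (y jm)^-1 by rewrite invr_gt0.
  by rewrite /m /f normrM (gtr0_norm yi).
have zb : forall i, `|z jm i 0| <= Mx + m.
  move=> i; rewrite (zB jm (ltnW (ltn_ord jm)) i).
  apply: le_trans (ler_normB _ _) _; apply: lerD; first exact: Hjx.
  by case: ifP => _; [exact: Hjm|rewrite normr0].
have vn : vnorm (z jm) <= n%:R * (Mx + m).
  rewrite /vnorm -(@ger0_norm _ (n%:R * (Mx + m))); last first.
    by rewrite mulr_ge0 // addr_ge0.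
  rewrite -sqrtr_sqr; apply: ler_wsqrtr.
  apply: (@le_trans _ _ (\sum_(i < n) (Mx + m) ^+ 2)).
    apply: ler_sum => i _; rewrite -(real_normK (num_real (z jm i 0))).
    by rewrite lerXn2r ?nnegrE ?addr_ge0 //.
  rewrite sumr_const card_ord exprMn -[(Mx + m) ^+ 2 *+ n]mulr_natl.
  apply: ler_wpM2r; first exact: sqr_ge0.
  by rewrite expr2 -natrM ler_nat leq_pmull.
apply: (@le_trans _ _ ((n%:R * (K + 1))^-1 * (n%:R * (Mx + m)))).
  apply: ler_wpM2l => //; rewrite invr_ge0; apply: mulr_ge0; first exact: ltW.
  by apply: addr_ge0; [exact: ltW|exact: ler01].
have nK : 0 < n%:R * (K + 1) by apply: mulr_gt0 => //; apply: addr_gt0.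
rewrite ler_pdivrMl // -mulrA.
apply: ler_wpM2l; first exact: ltW.
by rewrite mulrDl mul1r lerD2r.
Qed.
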